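(* The composite map $$(\pi_0^{\mathrm{N}}\mathcal{F}_2)(k)\xrightarrow{\pi_0^{\mathrm{N}}\mathrm{B\acute{e}z}_2}(\pi_0^{\mathrm{N}}\mathcal{S}_2)(k)\xrightarrow{\overline{q}_2\times\det}\mathrm{MW}^{\mathrm{s}}_2(k)\times_{k^\times/k^{\times2}}k^\times$$ is injective.
   Context: Let $k$ be a field. $\mathcal{F}_2(R)$ is the set of pairs $(A,B)$ of polynomials in $R[X]$, $A$ monic of degree 2, $\deg B<2$, $\mathrm{res}_{2,2}(A,B)\in R^\times$; $\mathcal{S}_2(R)$ the set of symmetric $2\times2$ matrices over $R$ with invertible determinant. For a functor $\mathcal{G}$ on $k$-algebras, $(\pi_0^{\mathrm{N}}\mathcal{G})(k)$ is the coequalizer of $\mathcal{G}(k[T])\rightrightarrows\mathcal{G}(k)$ (evaluation at $T=0,1$). $\mathrm{B\acute{e}z}_2(A,B)=[c_{p,q}]$ where $\frac{A(X)B(Y)-A(Y)B(X)}{X-Y}=\sum c_{p,q}X^{p-1}Y^{q-1}$. $\mathrm{MW}^{\mathrm{s}}_2(k)$ is the set of stable isomorphism classes of rank-2 non-degenerate symmetric bilinear forms over $k$; $\overline{q}_2$ sends the homotopy class of a matrix to the stable class of its form (well defined). The fibre product is over the discriminant (determinant mod squares) and $k^\times\to k^\times/k^{\times2}$. *)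

(* Defs.v *)
From HB Require Import structures.
From mathcomp Require Import all_boot all_order all_algebra.
From Stdlib Require Import Relations.
Set Implicit Arguments. Unset Strict Implicit. Unset Printing Implicit Defensive.
Import Order.TTheory GRing.Theory Num.Theory.
Local Open Scope ring_scope.

(* Sylvester matrix of (A,B) with formal degrees (2,2):
   rows 0,1 hold the coefficients a_2 a_1 a_0 of A (shifted),
   rows 2,3 hold the coefficients b_2 b_1 b_0 of B (shifted). *)
Definition sylv22 (R : nzRingType) (A B : {poly R}) : 'M[R]_4 :=
  \matrix_(i < 4, j < 4)
    let P := if (i < 2)%N then A else B in
    let r := if (i < 2)%N then (i : nat) else (i - 2)%N in
    if ((r <= j) && (j <= r + 2))%N then P`_(r + 2 - j) else 0.

Definition res22 (R : comNzRingType) (A B : {poly R}) : R := \det (sylv22 A B).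

Definition inF2 (R : comUnitRingType) (x : {poly R} * {poly R}) : Prop :=
  [/\ x.1 \is monic, size x.1 = 3%N, (size x.2 <= 2)%N
    & res22 x.1 x.2 \is a GRing.unit].

(* Bezoutian of (A,B) in degree 2: the matrix [c_{p,q}] with
   (A(X)B(Y) - A(Y)B(X))/(X-Y) = sum_{p,q} c_{p,q} X^(p-1) Y^(q-1).
   Writing A = a0 + a1 X + a2 X^2, B = b0 + b1 X + b2 X^2, this quotient is
   (a1 b0 - a0 b1) + (a2 b0 - a0 b2)(X + Y) + (a2 b1 - a1 b2) X Y.
   (0-indexed entries: (i,j) is the coefficient of X^i Y^j.) *)
Definition Bez2 (R : comNzRingType) (x : {poly R} * {poly R}) : 'M[R]_2 :=
  let a := x.1 in let b := x.2 in
  \matrix_(i < 2, j < 2)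
    if ((i : nat) == 0%N) && ((j : nat) == 0%N) then a`_1 * b`_0 - a`_0 * b`_1
    else if ((i : nat) == 1%N) && ((j : nat) == 1%N) then a`_2 * b`_1 - a`_1 * b`_2
    else a`_2 * b`_0 - a`_0 * b`_2.

Definition ev_pair (k : fieldType) (t : k) (h : {poly {poly k}} * {poly {poly k}})
  : {poly k} * {poly k} :=
  (map_poly (fun p : {poly k} => p.[t]) h.1, map_poly (fun p : {poly k} => p.[t]) h.2).

Definition naive_htpy (k : fieldType) (x y : {poly k} * {poly k}) : Prop :=
  exists h : {poly {poly k}} * {poly {poly k}},
    [/\ inF2 h, ev_pair 0 h = x & ev_pair 1 h = y].

(* the equivalence relation whose quotient is (pi_0^N F_2)(k) *)
Definition naive_equiv (k : fieldType) : relation ({poly k} * {poly k}) :=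
  clos_refl_sym_trans _ (@naive_htpy k).

Definition form_iso (k : fieldType) (n : nat) (M N : 'M[k]_n) : Prop :=
  exists P : 'M[k]_n, P \in unitmx /\ P^T *m M *m P = N.

Definition stably_iso (k : fieldType) (n : nat) (M N : 'M[k]_n) : Prop :=
  exists (m : nat) (G : 'M[k]_m), [/\ G^T = G, G \in unitmx &
    form_iso (block_mx M 0 0 G) (block_mx N 0 0 G)].

(* Main.v *)
Require Import Defs.
From HB Require Import structures.
From mathcomp Require Import all_boot all_order all_algebra.
From mathcomp Require Import ring zify.
From Stdlib Require Import Relations.
Set Implicit Arguments. Unset Strict Implicit.
Import GRing.Theory.
Local Open Scope ring_scope.

Definition mkP (R : nzRingType) (c0 c1 e0 e1 : R) : {poly R} * {poly R} :=
  (('X + c1%:P) * 'X + c0%:P, e1%:P * 'X + e0%:P).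

Lemma coefA (R : nzRingType) (c0 c1 : R) i :
  (('X + c1%:P) * 'X + c0%:P)`_i =
  if i == 0%N then c0 else if i == 1%N then c1 else if i == 2%N then 1 else 0.
Proof.
rewrite coefD coefMX coefD coefX !coefC.
by case: i => [|[|[|i]]] /=; rewrite ?addr0 ?add0r.
Qed.

Lemma coefB (R : nzRingType) (e0 e1 : R) i :
  (e1%:P * 'X + e0%:P)`_i = if i == 0%N then e0 else if i == 1%N then e1 else 0.
Proof.
rewrite coefD coefMX !coefC.
by case: i => [|[|i]] /=; rewrite ?addr0 ?add0r.
Qed.

Lemma det2 (R : comNzRingType) (A : 'M[R]_2) :
  \det A = A 0 0 * A 1 1 - A 0 1 * A 1 0.
Proof.
rewrite (expand_det_col _ 0) !big_ord_recr big_ord0 /= add0r /cofactor !det_mx11 !mxE /=.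
rewrite (_ : widen_ord _ _ = 0 :> 'I_2); last by apply: val_inj.
rewrite (_ : lift (0 : 'I_2) 0 = 1 :> 'I_2); last by apply: val_inj.
rewrite (_ : lift (ord_max : 'I_2) 0 = 0 :> 'I_2); last by apply: val_inj.
rewrite (_ : (ord_max : 'I_2) = 1); last by apply: val_inj.
rewrite /= expr0 expr1 !mul1r; ring.
Qed.

Lemma res22_mkP (R : comNzRingType) (c0 c1 e0 e1 : R) :
  res22 (mkP c0 c1 e0 e1).1 (mkP c0 c1 e0 e1).2 = e0 ^+ 2 - c1 * e0 * e1 + c0 * e1 ^+ 2.
Proof.
rewrite /res22 (expand_det_col _ 0) !big_ord_recr big_ord0 /= add0r.
rewrite /cofactor !mxE /= !coefA !coefB /= !mul0r !addr0 expr0 !mul1r.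
rewrite (expand_det_col _ 0) !big_ord_recr big_ord0 /= add0r.
rewrite /cofactor !mxE /= !coefA !coefB /= !mul0r !addr0 !det2 !mxE /= !coefA !coefB /=.
rewrite /= expr0 expr1; ring.
Qed.

Lemma size_mkP1 (R : nzRingType) (c0 c1 : R) : size (('X + c1%:P) * 'X + c0%:P) = 3%N.
Proof.
rewrite size_MXaddC size_XaddC.
by have -> : ('X + c1%:P == 0) = false by apply/negbTE; rewrite -size_poly_eq0 size_XaddC.
Qed.

Lemma size_mkP2 (R : nzRingType) (e0 e1 : R) : (size (e1%:P * 'X + e0%:P)%R <= 2)%N.
Proof.
rewrite size_MXaddC; case: ifP => // _; have := size_polyC e1; case: (e1 != 0) => -> //.
Qed.

Lemma inF2_mkP (R : comUnitRingType) (c0 c1 e0 e1 : R) :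
  e0 ^+ 2 - c1 * e0 * e1 + c0 * e1 ^+ 2 \is a GRing.unit -> inF2 (mkP c0 c1 e0 e1).
Proof.
move=> u; split => //=; last by rewrite res22_mkP.
- by apply/monicP; rewrite lead_coefE size_mkP1 coefA.
- by rewrite size_mkP1.
- exact: size_mkP2.
Qed.

Lemma inF2_eq (R : comUnitRingType) (x : {poly R} * {poly R}) :
  inF2 x -> x = mkP x.1`_0 x.1`_1 x.2`_0 x.2`_1.
Proof.
case: x => A B [/= mA sA sB _]; congr (_, _); apply/polyP => i.
- rewrite coefA; case: i => [|[|[|i]]] //=.
    by move/monicP: mA; rewrite lead_coefE sA.
  by rewrite nth_default // sA.
- rewrite coefB; case: i => [|[|i]] //=.
  by rewrite nth_default // (leq_trans sB).
Qed.

Definition bezm (R : nzRingType) (p q s : R) : 'M[R]_2 :=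
  \matrix_(i < 2, j < 2)
    if ((i : nat) == 0%N) && ((j : nat) == 0%N) then p
    else if ((i : nat) == 1%N) && ((j : nat) == 1%N) then s else q.

Lemma Bez2_mkP (R : comNzRingType) (c0 c1 e0 e1 : R) :
  Bez2 (mkP c0 c1 e0 e1) = bezm (c1 * e0 - c0 * e1) e0 e1.
Proof.
apply/matrixP => i j; rewrite !mxE /= !coefA !coefB /=.
by rewrite !mul1r !mulr0 !subr0.
Qed.

Lemma ev_mkP (k : fieldType) (t : k) (a0 a1 b0 b1 : {poly k}) :
  ev_pair t (mkP a0 a1 b0 b1) = mkP a0.[t] a1.[t] b0.[t] b1.[t].
Proof.
rewrite /ev_pair /=; congr (_, _); apply/polyP => i;
  rewrite coef_map_id0 ?horner0 // ?coefA ?coefB.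
- by case: i => [|[|[|i]]] //=; rewrite ?hornerC.
- by case: i => [|[|i]] //=; rewrite ?hornerC.
Qed.

Lemma htpy (k : fieldType) (a0 a1 b0 b1 : {poly k}) (c : k) :
  c != 0 -> b0 ^+ 2 - a1 * b0 * b1 + a0 * b1 ^+ 2 = c%:P ->
  naive_htpy (mkP a0.[0] a1.[0] b0.[0] b1.[0]) (mkP a0.[1] a1.[1] b0.[1] b1.[1]).
Proof.
move=> c0 e; exists (mkP a0 a1 b0 b1); split; rewrite ?ev_mkP //.
apply: inF2_mkP; rewrite e poly_unitE size_polyC c0 coefC /=.
by rewrite unitfE.
Qed.

Ltac hsimp := rewrite ?(hornerD, hornerM, hornerC, hornerX, hornerN, horner0).

Section Triples.
Variable k : fieldType.

Definition dt (p q s : k) := p * s - q ^+ 2.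
Definition can (p q s : k) : {poly k} * {poly k} :=
  mkP (- p ^+ 2 / dt p q s) (- (p * q) / dt p q s) q s.

Lemma htpy' (a0 a1 b0 b1 : {poly k}) (c : k) x y :
  c != 0 -> b0 ^+ 2 - a1 * b0 * b1 + a0 * b1 ^+ 2 = c%:P ->
  x = mkP a0.[0] a1.[0] b0.[0] b1.[0] -> y = mkP a0.[1] a1.[1] b0.[1] b1.[1] ->
  naive_equiv x y.
Proof. by move=> c0 e -> ->; apply: rst_step; apply: htpy e. Qed.

Lemma path (P Q S : {poly k}) (d p0 q0 s0 p1 q1 s1 : k) :
  d != 0 -> P * S - Q ^+ 2 = d%:P ->
  P.[0] = p0 -> Q.[0] = q0 -> S.[0] = s0 ->
  P.[1] = p1 -> Q.[1] = q1 -> S.[1] = s1 ->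
  naive_equiv (can p0 q0 s0) (can p1 q1 s1).
Proof.
move=> d0 hd e1 e2 e3 e4 e5 e6.
have hev t : dt P.[t] Q.[t] S.[t] = d.
  by have := congr1 (fun p => p.[t]) hd; rewrite /dt /= !hornerE.
apply: (@htpy' (- P ^+ 2 * (d^-1)%:P) (- (P * Q) * (d^-1)%:P) Q S (- d)).
- by rewrite oppr_eq0.
- have hdd : d%:P * (d^-1)%:P = 1 by rewrite -polyCM mulfV.
  transitivity (Q ^+ 2 - (P * S - Q ^+ 2) * (P * S) * (d^-1)%:P); first by ring.
  rewrite hd.
  transitivity (Q ^+ 2 - (d%:P * (d^-1)%:P) * (P * S)); first by ring.
  by rewrite hdd mul1r polyCN -hd; ring.
- by rewrite /can -e1 -e2 -e3 hev !hornerE.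
- by rewrite /can -e4 -e5 -e6 hev !hornerE.
Qed.

Lemma can_eq p q s p' q' s' : p = p' -> q = q' -> s = s' ->
  naive_equiv (can p q s) (can p' q' s').
Proof. by move=> -> -> ->; apply: rst_refl. Qed.

Lemma Lmove p q s l : dt p q s != 0 ->
  naive_equiv (can p q s) (can (p + 2 * l * q + l ^+ 2 * s) (q + l * s) s).
Proof.
move=> d0.
apply: (@path (p%:P + (2 * l * q)%:P * 'X + (l ^+ 2 * s)%:P * ('X * 'X))
  (q%:P + (l * s)%:P * 'X) s%:P (dt p q s)) => //;
  rewrite /dt; try ring; hsimp; ring.
Qed.

Lemma Umove p q s m : dt p q s != 0 ->
  naive_equiv (can p q s) (can p (q + m * p) (s + 2 * m * q + m ^+ 2 * p)).
Proof.
move=> d0.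
apply: (@path p%:P (q%:P + (m * p)%:P * 'X)
  (s%:P + (2 * m * q)%:P * 'X + (m ^+ 2 * p)%:P * ('X * 'X)) (dt p q s)) => //;
  rewrite /dt; try ring; hsimp; ring.
Qed.

Lemma Smove q s s' : q != 0 -> naive_equiv (can 0 q s) (can 0 q s').
Proof.
move=> q0.
apply: (@path 0 q%:P (s%:P + (s' - s)%:P * 'X) (- q ^+ 2)) => //;
  try ring; hsimp; try ring.
by rewrite oppr_eq0 expf_neq0.
Qed.

Lemma Pmove q p p' : q != 0 -> naive_equiv (can p q 0) (can p' q 0).
Proof.
move=> q0.
apply: (@path (p%:P + (p' - p)%:P * 'X) q%:P 0 (- q ^+ 2)) => //;
  try ring; hsimp; try ring.
by rewrite oppr_eq0 expf_neq0.
Qed.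

End Triples.

Section Reach.
Variable k : fieldType.

Lemma point (a0 a1 b0 b1 : k) : b0 ^+ 2 - a1 * b0 * b1 + a0 * b1 ^+ 2 != 0 ->
  naive_equiv (mkP a0 a1 b0 b1) (can (a1 * b0 - a0 * b1) b0 b1).
Proof.
move=> r0.
set p := a1 * b0 - a0 * b1.
have d0 : dt p b0 b1 != 0.
  by rewrite (_ : dt p b0 b1 = - (b0 ^+ 2 - a1 * b0 * b1 + a0 * b1 ^+ 2)) ?oppr_eq0 // /dt /p; ring.
set d := dt p b0 b1 in d0 *.
set a0' := - p ^+ 2 / d; set a1' := - (p * b0) / d.
have h0 : (a1' - a1) * b0 - (a0' - a0) * b1 = 0.
  rewrite /a1' /a0' /d /dt /p; field; exact: d0.
apply: (@htpy' _ (a0%:P + (a0' - a0)%:P * 'X) (a1%:P + (a1' - a1)%:P * 'X) b0%:P b1%:P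
  (b0 ^+ 2 - a1 * b0 * b1 + a0 * b1 ^+ 2)) => //.
- transitivity ((b0 ^+ 2 - a1 * b0 * b1 + a0 * b1 ^+ 2)%:P
     - ((a1' - a1) * b0 - (a0' - a0) * b1)%:P * b1%:P * 'X); first by ring.
  by rewrite h0; ring.
- by congr mkP; hsimp; ring.
- by rewrite /can -/d; congr mkP; hsimp; rewrite /a0' /a1'; ring.
Qed.

Definition val (p q s w1 w2 : k) := p * w1 ^+ 2 + 2 * q * w1 * w2 + s * w2 ^+ 2.

Lemma three (p q s l1 m l2 : k) : dt p q s != 0 ->
  exists q' s', naive_equiv (can p q s)
     (can (val p q s (1 + m * l2) (l1 * (1 + m * l2) + l2)) q' s')
   /\ dt (val p q s (1 + m * l2) (l1 * (1 + m * l2) + l2)) q' s' = dt p q s.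
Proof.
move=> d0.
set p1 := p + 2 * l1 * q + l1 ^+ 2 * s; set q1 := q + l1 * s.
set q2 := q1 + m * p1; set s2 := s + 2 * m * q1 + m ^+ 2 * p1.
have e1 : dt p1 q1 s = dt p q s by rewrite /dt /p1 /q1; ring.
have e2 : dt p1 q2 s2 = dt p q s by rewrite -e1 /dt /q2 /s2; ring.
exists (q2 + l2 * s2), s2; split.
- apply: rst_trans (Lmove l1 d0) _.
  rewrite -/p1 -/q1.
  apply: rst_trans (Umove m _) _; first by rewrite e1.
  rewrite -/q2 -/s2.
  apply: rst_trans (Lmove l2 _) _; first by rewrite e2.
  by apply: can_eq; rewrite /val /s2 /q2 /p1 /q1; ring.
- by rewrite -e2 /dt /val /s2 /q2 /p1 /q1; ring.
Qed.

Lemma param (w1 w2 : k) : w1 != 0 \/ w2 != 0 ->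
  exists l1 m l2, w1 = 1 + m * l2 /\ w2 = l1 * (1 + m * l2) + l2.
Proof.
case: (eqVneq w1 0) => [-> [//|w20]|w10 _].
  by exists 0, (- w2^-1), w2; split; [field|ring].
by exists ((w2 - 1) / w1), (w1 - 1), 1; split; [ring|field].
Qed.

Lemma reach (p q s w1 w2 : k) : dt p q s != 0 -> val p q s w1 w2 != 0 ->
  naive_equiv (can p q s) (can (val p q s w1 w2) 0 (dt p q s / val p q s w1 w2)).
Proof.
move=> d0 v0.
have : w1 != 0 \/ w2 != 0.
  case: (eqVneq w1 0) => [e1|]; last by left.
  case: (eqVneq w2 0) => [e2|]; last by right.
  by move: v0; rewrite e1 e2 /val; rewrite (_ : _ + _ = 0) ?eqxx //; ring.
case/param => l1 [m [l2 [e1 e2]]].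
have [q' [s' [h hd]]] := three l1 m l2 d0.
rewrite e1 e2 in v0 *.
set a := val _ _ _ _ _ in h hd v0 *.
apply: rst_trans h _.
apply: rst_trans (Umove (- (q' / a)) _) _; first by rewrite hd.
apply: can_eq => //; rewrite -?hd /dt; field; exact: v0.
Qed.

Lemma reach0 (p q s w1 w2 a : k) : dt p q s != 0 -> val p q s w1 w2 = 0 ->
  w1 != 0 \/ w2 != 0 -> a != 0 ->
  naive_equiv (can p q s) (can a 0 (dt p q s / a)).
Proof.
move=> d0 v0 /param [l1 [m [l2 [e1 e2]]]] a0.
have [q' [s' [h hd]]] := three l1 m l2 d0.
rewrite -e2 -e1 v0 in h hd.
have q0 : q' != 0.
  apply/eqP => q0; move: d0; rewrite -hd q0 /dt; rewrite (_ : _ - _ = 0) ?eqxx //; ring.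
apply: rst_trans h _.
apply: rst_trans (Smove s' 0 q0) _.
apply: rst_trans (Pmove 0 a q0) _.
apply: rst_trans (Umove (- (q' / a)) _) _.
  by rewrite (_ : dt a q' 0 = - q' ^+ 2) ?oppr_eq0 ?expf_neq0 // /dt; ring.
apply: can_eq => //; rewrite -?hd /dt; field; exact: a0.
Qed.

End Reach.
Section LA.
Variables (k : fieldType) (m : nat).
Local Notation n := (2 + m)%N.

Definition Dt : 'M[k]_n := block_mx 1%:M 0 0 0.
Definition Db : 'M[k]_n := block_mx 0 0 0 1%:M.

Lemma DtDb : Dt + Db = 1%:M.
Proof. by rewrite /Dt /Db add_block_mx ?addr0 ?add0r -scalar_mx_block. Qed.

Lemma DbDt : Db *m Dt = 0.
Proof. by rewrite /Dt /Db mulmx_block ?mulmx0 ?mul0mx ?addr0 block_mx0. Qed.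

Lemma DtDt : Dt *m Dt = Dt.
Proof. by rewrite /Dt mulmx_block ?mulmx0 ?mul0mx ?mulmx1 ?addr0. Qed.

Lemma trDt : Dt^T = Dt.
Proof. by rewrite /Dt tr_block_mx !trmx0 trmx1. Qed.

Lemma trDb : Db^T = Db.
Proof. by rewrite /Db tr_block_mx !trmx0 trmx1. Qed.

Lemma rankDt : \rank Dt = 2%N.
Proof. by rewrite /Dt -pid_mx_block rank_pid_mx // leq_addr. Qed.

Lemma blkDt (A : 'M[k]_2) (B : 'M[k]_m) :
  block_mx A 0 0 B *m Dt = Dt *m block_mx A 0 0 B.
Proof. by rewrite /Dt !mulmx_block ?mulmx0 ?mul0mx ?mulmx1 ?mul1mx ?addr0 ?add0r. Qed.

Lemma blkDb (A : 'M[k]_2) (B : 'M[k]_m) :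
  block_mx A 0 0 B *m Db = Db *m block_mx A 0 0 B.
Proof. by rewrite /Db !mulmx_block ?mulmx0 ?mul0mx ?mulmx1 ?mul1mx ?addr0 ?add0r. Qed.

Lemma blkDb2 (A A' : 'M[k]_2) (B : 'M[k]_m) :
  block_mx A 0 0 B *m Db = block_mx A' 0 0 B *m Db.
Proof. by rewrite /Db !mulmx_block ?mulmx0 ?mul0mx ?mulmx1 ?addr0 ?add0r. Qed.

Lemma rowDt (w : 'rV[k]_n) : w *m Dt = row_mx (lsubmx w) 0.
Proof.
by rewrite -{1}(hsubmxK w) /Dt mul_row_block ?mulmx0 ?mulmx1 ?addr0.
Qed.

Lemma rowDb (w : 'rV[k]_n) : w *m Db = row_mx 0 (rsubmx w).
Proof.
by rewrite -{1}(hsubmxK w) /Db mul_row_block ?mulmx0 ?mulmx1 ?addr0 add0r.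
Qed.

Lemma form_row (A : 'M[k]_2) (B : 'M[k]_m) (a : 'rV[k]_2) (b : 'rV[k]_m) :
  row_mx a b *m block_mx A 0 0 B *m (row_mx a b)^T =
  a *m A *m a^T + b *m B *m b^T.
Proof.
by rewrite mul_row_block ?mulmx0 ?addr0 ?add0r tr_row_mx mul_row_col.
Qed.

Lemma formE (A : 'M[k]_2) (B : 'M[k]_m) (w : 'rV[k]_n) :
  w *m block_mx A 0 0 B *m w^T =
  lsubmx w *m A *m (lsubmx w)^T + rsubmx w *m B *m (rsubmx w)^T.
Proof. by rewrite -form_row hsubmxK. Qed.

Lemma nz_row p q (A : 'M[k]_(p, q)) : A != 0 -> exists i, row i A != 0.
Proof.
move=> A0; case: (boolP [exists i, row i A != 0]) => [/existsP//|].
rewrite negb_exists => /forallP h; exfalso; move/negP: A0; apply.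
apply/eqP/row_matrixP => i; rewrite row0; exact/eqP/negbNE/h.
Qed.

Lemma LA (M N : 'M[k]_2) (G : 'M[k]_m) (R : 'M[k]_n) :
  M \in unitmx -> G \in unitmx ->
  R *m block_mx M 0 0 G *m R^T = block_mx N 0 0 G ->
  exists (u v : 'rV[k]_2), (u != 0 \/ v != 0) /\ u *m M *m u^T = v *m N *m v^T.
Proof.
move=> Mu Gu hR.
have Xu : block_mx M 0 0 G \in unitmx.
  by rewrite unitmxE det_ublock unitrM -!unitmxE Mu Gu.
pose K1 := kermx ((R - 1%:M) *m Db).
have hK : K1 *m ((R - 1%:M) *m Db) = 0 := mulmx_ker _.
have main : ~~ ((K1 *m Dt == 0) && (K1 *m (R - 1%:M) == 0)).
{ apply/negP => /andP [/eqP K1Dt /eqP K1T].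
  have K1R : K1 *m R = K1.
    by apply/eqP; rewrite -subr_eq0 -[X in _ - X]mulmx1 -mulmxBr K1T.
  have K1Db : K1 *m Db = K1 by rewrite -[K1 in RHS]mulmx1 -DtDb mulmxDr K1Dt add0r.
  have DbK : Db *m K1^T = K1^T by rewrite -trDb -trmx_mul K1Db.
  have XK : block_mx M 0 0 G *m K1^T = block_mx N 0 0 G *m K1^T.
    by rewrite -DbK !mulmxA (blkDb2 M N).
  have h1 : R *m block_mx M 0 0 G *m K1^T = block_mx N 0 0 G *m K1^T.
    by rewrite -{1}K1R trmx_mul !mulmxA hR.
  have h2 : (R - 1%:M) *m block_mx M 0 0 G *m K1^T = 0.
    by rewrite !mulmxBl mul1mx h1 XK subrr.
  have hc : (R - 1%:M) *m Db *m (block_mx M 0 0 G *m K1^T) = 0.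
    by rewrite !mulmxA -(mulmxA (R - 1%:M) Db) -blkDb mulmxA -(mulmxA _ Db) DbK h2.
  have hZ : (R - 1%:M) *m Db *m (col_mx Dt (K1 *m (block_mx M 0 0 G)^T))^T = 0.
    rewrite tr_col_mx trmx_mul trmxK mul_mx_row hc trDt -mulmxA DbDt mulmx0.
    by rewrite row_mx0.
  have hsub : ((R - 1%:M) *m Db <= kermx (col_mx Dt (K1 *m (block_mx M 0 0 G)^T))^T)%MS.
    exact/sub_kermxP.
  have cap0 : (Dt :&: K1 *m (block_mx M 0 0 G)^T)%MS = 0.
    set C := (Dt :&: _)%MS.
    have /submxP [A1 eA] : (C <= Dt)%MS by apply: capmxSl.
    have /submxP [B1 eB] : (C <= K1 *m (block_mx M 0 0 G)^T)%MS by apply: capmxSr.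
    have : C *m Dt = C by rewrite eA -mulmxA DtDt.
    rewrite {1}eB tr_block_mx !trmx0 -mulmxA -(mulmxA K1) blkDt (mulmxA K1) K1Dt mul0mx mulmx0.
    by move<-.
  have r1 := mxrankS hsub.
  have rZ : \rank (col_mx Dt (K1 *m (block_mx M 0 0 G)^T)) = (2 + (n - \rank ((R - 1%:M) *m Db)))%N.
    rewrite -(addsmxE _ _).1 mxrank_disjoint_sum // rankDt.
    by rewrite (mxrankMfree K1) ?row_free_unit ?unitmx_tr // /K1 mxrank_ker.
  have rZ' := rank_leq_col (col_mx Dt (K1 *m (block_mx M 0 0 G)^T)).
  rewrite mxrank_ker mxrank_tr rZ in r1.
  rewrite rZ in rZ'.
  have := rank_leq_row ((R - 1%:M) *m Db).
  move: r1 rZ'; set a := \rank _; lia. }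
have [w [wK wn]] : exists w : 'rV[k]_n, w *m ((R - 1%:M) *m Db) = 0 /\
    ~~ ((w *m Dt == 0) && (w *m (R - 1%:M) == 0)).
  move: main; rewrite negb_and => /orP [] /nz_row [i hi];
    exists (row i K1); rewrite -row_mul hK row0; split => //;
    rewrite negb_and -!row_mul hi //= orbT //.
have wT : w *m (R - 1%:M) = w *m R - w by rewrite mulmxBr mulmx1.
have rr : rsubmx (w *m R) = rsubmx w.
  move: wK; rewrite mulmxA rowDb => /eqP; rewrite row_mx_eq0 => /andP [_ /eqP].
  rewrite wT => h; apply/eqP; rewrite -subr_eq0; apply/eqP; rewrite -h.
  by apply/matrixP => i j; rewrite !mxE.
exists (lsubmx (w *m R)), (lsubmx w); split.
- apply/orP; rewrite -negb_and; apply: contra wn => /andP [/eqP e1 /eqP e2].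
  rewrite rowDt e2 row_mx0 eqxx /= wT.
  rewrite -(hsubmxK (w *m R - w)).
  have -> : lsubmx (w *m R - w) = 0.
    apply/matrixP => i j; move/matrixP: e1 => /(_ i j); move/matrixP: e2 => /(_ i j).
    by rewrite !mxE => -> ->; rewrite subrr.
  have -> : rsubmx (w *m R - w) = 0.
    by apply/matrixP => i j; move/matrixP: rr => /(_ i j); rewrite !mxE => ->; rewrite subrr.
  by rewrite row_mx0.
- have h : w *m R *m block_mx M 0 0 G *m (w *m R)^T = w *m block_mx N 0 0 G *m w^T.
    by rewrite trmx_mul -hR !mulmxA.
  rewrite !formE rr in h.
  exact: (addIr _ h).
Qed.

End LA.

Lemma bezm_form (k : fieldType) (p q s : k) (u : 'rV[k]_2) :
  (u *m bezm p q s *m u^T) 0 0 = val p q s (u 0 0) (u 0 1).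
Proof.
rewrite !mxE !big_ord_recr !big_ord0 /= !add0r !mxE !big_ord_recr !big_ord0 /= !add0r !mxE /=.
rewrite /val.
have -> : (ord_max : 'I_2) = 1 by apply: val_inj.
have -> : (widen_ord (leqnSn 1) ord_max : 'I_2) = 0 by apply: val_inj.
rewrite /=; ring.
Qed.

Lemma rv2_nz (k : fieldType) (u : 'rV[k]_2) : u != 0 -> u 0 0 != 0 \/ u 0 1 != 0.
Proof.
move=> u0; case: (eqVneq (u 0 0) 0) => [e0|]; last by left.
case: (eqVneq (u 0 1) 0) => [e1|]; last by right.
exfalso; move/eqP: u0; apply; apply/matrixP => i j; rewrite mxE.
rewrite (ord1 i); case: j => [[|[|j]] hj] //.
- by rewrite -e0; congr (u _ _); apply: val_inj.
- by rewrite -e1; congr (u _ _); apply: val_inj.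
Qed.

Lemma det_bezm (k : fieldType) (p q s : k) : \det (bezm p q s) = dt p q s.
Proof. by rewrite det2 !mxE /= /dt expr2. Qed.

Lemma any_reach (k : fieldType) (p q s : k) : dt p q s != 0 ->
  exists2 a, a != 0 & naive_equiv (can p q s) (can a 0 (dt p q s / a)).
Proof.
move=> d0; case: (eqVneq (val p q s 1 0) 0) => [v0|v0].
  by exists 1; [exact: oner_neq0 | apply: (reach0 d0 v0); [left|]; exact: oner_neq0].
by exists (val p q s 1 0) => //; apply: reach.
Qed.

Unset Implicit Arguments.
Unset Strict Implicit.

Theorem corollary3p20 (k : fieldType) (x y : {poly k} * {poly k}) :
  inF2 x -> inF2 y ->
  stably_iso (Bez2 x) (Bez2 y) ->
  \det (Bez2 x) = \det (Bez2 y) ->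
  naive_equiv x y.
Proof.
move=> hx hy [m [G [_ Gu [P [_ hP]]]]] hdet.
have [a0 [a1 [b0 [b1 ex]]]] : exists a0 a1 b0 b1, x = mkP a0 a1 b0 b1.
  by do 4 eexists; exact: inF2_eq hx.
have [c0 [c1 [e0 [e1 ey]]]] : exists a0 a1 b0 b1, y = mkP a0 a1 b0 b1.
  by do 4 eexists; exact: inF2_eq hy.
subst x y.
have rx : b0 ^+ 2 - a1 * b0 * b1 + a0 * b1 ^+ 2 != 0.
  by case: hx => _ _ _; rewrite res22_mkP unitfE.
have ry : e0 ^+ 2 - c1 * e0 * e1 + c0 * e1 ^+ 2 != 0.
  by case: hy => _ _ _; rewrite res22_mkP unitfE.
rewrite !Bez2_mkP in hP hdet.
rewrite !det_bezm in hdet.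
apply: rst_trans (point rx) _; apply: rst_sym; apply: rst_trans (point ry) _; apply: rst_sym.
set px := a1 * b0 - a0 * b1 in hP hdet *; set py := c1 * e0 - c0 * e1 in hP hdet *.
have dx0 : dt px b0 b1 != 0.
  by rewrite (_ : dt px b0 b1 = - (b0 ^+ 2 - a1 * b0 * b1 + a0 * b1 ^+ 2)) ?oppr_eq0 // /dt /px; ring.
have dy0 : dt py e0 e1 != 0 by rewrite -hdet.
have Mu : bezm px b0 b1 \in unitmx by rewrite unitmxE det_bezm unitfE.
have hR : P^T *m block_mx (bezm px b0 b1) 0 0 G *m (P^T)^T = block_mx (bezm py e0 e1) 0 0 G.
  by rewrite !trmxK.
have [u [v [uv huv]]] := LA Mu Gu hR.
have := congr1 (fun A : 'M[k]_1 => A 0 0) huv; rewrite /= !bezm_form => hc.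
case: (eqVneq (val px b0 b1 (u 0 0) (u 0 1)) 0) => [z0|z0].
- case: uv => [/rv2_nz u0|/rv2_nz v0].
  + have [a an hy'] := any_reach dy0.
    apply: rst_trans (reach0 dx0 z0 u0 an) _; apply: rst_sym.
    by rewrite hdet.
  + have [a an hx'] := any_reach dx0.
    apply: rst_trans hx' _; apply: rst_sym.
    rewrite hc in z0; rewrite hdet; exact: (reach0 dy0 z0 v0 an).
- apply: rst_trans (reach dx0 z0) _; apply: rst_sym.
  rewrite hc hdet; apply: reach => //; by rewrite -hc.
Qed.
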